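(* Let $w=w(x_1,\dots,x_n)$ be a multilinear commutator word. There exists a positive integer $t_n$ depending only on $n$ such that for every group $G$, every normal subgroup $H$ of $G$, and all $g_1,\dots,g_n\in G$ and $h_1,\dots,h_n\in H$, the element $w(g_1h_1,\dots,g_nh_n)$ can be written as $w(g_1h_1,\dots,g_nh_n)=ah$, where $a$ is a product of at most $t_n$ conjugates (in $G$) of elements of $\{g_1^{\pm1},\dots,g_n^{\pm1}\}$ and $h$ is a $w$-value of $H$.
   Context: Multilinear commutator words are defined recursively: $x$ is a multilinear commutator, and if $u,v$ are multilinear commutators in disjoint sets of variables then $[u,v]$ is one. A $w$-value of $H$ is an element $w(k_1,\dots,k_n)$ with $k_i\in H$. *)

(* Defs.v *)
From mathcomp Require Import all_boot.
Set Implicit Arguments. Unset Strict Implicit. Unset Printing Implicit Defensive.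

Record group := Group {
  gcarrier :> Type;
  gmul : gcarrier -> gcarrier -> gcarrier;
  ginv : gcarrier -> gcarrier;
  gone : gcarrier;
  gmulA : forall x y z, gmul x (gmul y z) = gmul (gmul x y) z;
  gmul1l : forall x, gmul gone x = x;
  gmulVl : forall x, gmul (ginv x) x = gone
}.

Section GroupDefs.
Variable G : group.

Definition gconj (x y : G) : G := gmul (ginv y) (gmul x y).
Definition gcomm (a b : G) : G := gmul (gmul (ginv a) (ginv b)) (gmul a b).
Definition gprod (s : seq G) : G := foldr (@gmul G) (gone G) s.

Definition normal_subgroup (H : G -> Prop) : Prop :=
  [/\ H (gone G),
      (forall x y, H x -> H y -> H (gmul x y)),
      (forall x, H x -> H (ginv x)) &
      (forall x y, H x -> H (gconj x y))].
End GroupDefs.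

Inductive cword : Type :=
| CVar of nat
| CComm of cword & cword.

Fixpoint cvars (w : cword) : seq nat :=
  match w with
  | CVar i => [:: i]
  | CComm u v => cvars u ++ cvars v
  end.

Fixpoint ceval (G : group) (k : nat -> G) (w : cword) : G :=
  match w with
  | CVar i => k i
  | CComm u v => gcomm (ceval k u) (ceval k v)
  end.

(* w is a multilinear commutator word in the n variables x_0, ..., x_(n-1):
   every variable occurs exactly once (this forces the two sides of each
   bracket to involve disjoint sets of variables). *)
Definition multilinear_in (n : nat) (w : cword) : Prop :=
  perm_eq (cvars w) (iota 0 n).

Definition prod_conj_gens (G : group) (n t : nat) (g : nat -> G) (a : G) : Prop :=
  exists s : seq (nat * bool * G),
    [/\ size s <= t,
        all (fun p => p.1.1 < n) s &
        a = gprod [seq gconj (if p.1.2 then g p.1.1 else ginv (g p.1.1)) p.2 | p <- s]].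

Definition w_value (G : group) (H : G -> Prop) (n : nat) (w : cword) (h : G) : Prop :=
  exists k : nat -> G, (forall i, i < n -> H (k i)) /\ h = ceval k w.

(* Main.v *)
Require Import Defs.
From mathcomp Require Import all_boot.
From mathcomp Require Import zify.

Section GL.
Variable G : group.
Implicit Types x y z : G.

Lemma gmulV x : gmul x (ginv x) = gone G.
Proof.
rewrite -[gmul x _]gmul1l -{1}(gmulVl (ginv x)).
by rewrite -gmulA (gmulA (ginv x)) gmulVl gmul1l gmulVl.
Qed.

Lemma gmul1r x : gmul x (gone G) = x.
Proof. by rewrite -(gmulVl x) gmulA gmulV gmul1l. Qed.

Lemma gmulKV x y : gmul (ginv x) (gmul x y) = y.
Proof. by rewrite gmulA gmulVl gmul1l. Qed.

Lemma gmulVK x y : gmul x (gmul (ginv x) y) = y.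
Proof. by rewrite gmulA gmulV gmul1l. Qed.

Lemma ginv_unique x z : gmul x z = gone G -> ginv x = z.
Proof. by move=> h; rewrite -(gmulKV x z) h gmul1r. Qed.

Lemma ginvK x : ginv (ginv x) = x.
Proof. by apply: ginv_unique; rewrite gmulVl. Qed.

Lemma ginvM x y : ginv (gmul x y) = gmul (ginv y) (ginv x).
Proof. by apply: ginv_unique; rewrite -gmulA gmulVK gmulV. Qed.

Lemma ginv1 : ginv (gone G) = gone G.
Proof. by apply: ginv_unique; rewrite gmul1l. Qed.

End GL.

Ltac gsimpl := rewrite /gcomm /gconj; rewrite ?ginvM ?ginvK ?ginv1; rewrite -?gmulA;
  do ?rewrite (gmulKV, gmulVK, gmulV, gmulVl, gmul1l, gmul1r).

Lemma key (G : group) (X Y u v : G) :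
  gcomm (gmul X u) (gmul Y v) =
  gmul (gmul (gmul (gconj (ginv X) u) (gconj (ginv Y) (gmul v u)))
          (gmul (gconj X (gmul v u)) (gconj Y (gmul (ginv u) (gmul v u)))))
       (gcomm u v).
Proof. gsimpl. by []. Qed.

Section Main.
Variables (G : group) (g : nat -> G).

Definition fg (p : nat * bool * G) : G :=
  gconj (if p.1.2 then g p.1.1 else ginv (g p.1.1)) p.2.

Definition conjL (c : G) (s : seq (nat * bool * G)) :=
  [seq (p.1, gmul p.2 c) | p <- s].
Definition invL (s : seq (nat * bool * G)) :=
  rev [seq ((p.1.1, ~~ p.1.2), p.2) | p <- s].

Lemma gprod_cat (s1 s2 : seq G) : gprod (s1 ++ s2) = gmul (gprod s1) (gprod s2).
Proof. by elim: s1 => [|x s IH] /=; rewrite ?gmul1l // IH gmulA. Qed.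

Lemma gprod_conjL c s : gprod (map fg (conjL c s)) = gconj (gprod (map fg s)) c.
Proof.
elim: s => [|p s IH] /=; first by rewrite /gconj gmul1l gmulVl.
rewrite IH /fg /=; gsimpl; by [].
Qed.

Lemma gprod_invL s : gprod (map fg (invL s)) = ginv (gprod (map fg s)).
Proof.
elim: s => [|p s IH] /=; first by rewrite ginv1.
rewrite /invL map_cons rev_cons map_rcons -cats1 gprod_cat -/(invL s) IH /= ginvM.
rewrite gmul1r; congr gmul; rewrite /fg /=; case: p.1.2; gsimpl; by [].
Qed.

Lemma size_conjL c s : size (conjL c s) = size s.
Proof. by rewrite size_map. Qed.
Lemma size_invL s : size (invL s) = size s.
Proof. by rewrite size_rev size_map. Qed.
Lemma all_conjL (P : pred nat) c s : all (fun p => P p.1.1) (conjL c s) = all (fun p => P p.1.1) s.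
Proof. by rewrite all_map. Qed.
Lemma all_invL (P : pred nat) s : all (fun p => P p.1.1) (invL s) = all (fun p => P p.1.1) s.
Proof. by rewrite all_rev all_map. Qed.

Lemma ceval_eq (k k' : nat -> G) w : (forall i, i \in cvars w -> k i = k' i) -> ceval k w = ceval k' w.
Proof.
elim: w => [i|u IHu v IHv] /= E; first by apply: E; rewrite inE.
rewrite IHu ?IHv // => i Hi; apply: E; rewrite mem_cat Hi ?orbT //.
Qed.

Lemma cvars_gt0 w : 0 < size (cvars w).
Proof. elim: w => //= u IHu v IHv; rewrite size_cat; lia. Qed.

Lemma main (H : G -> Prop) (h : nat -> G) w :
  uniq (cvars w) -> (forall i, i \in cvars w -> H (h i)) ->
  exists s k, [/\ size s <= 4 ^ size (cvars w), all (fun p => p.1.1 \in cvars w) s,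
     (forall i, i \in cvars w -> H (k i)) &
     ceval (fun i => gmul (g i) (h i)) w = gmul (gprod (map fg s)) (ceval k w)].
Proof.
elim: w => [i|w1 IH1 w2 IH2] /= U Hh.
  exists [:: ((i, true), gone G)], h; split => //=.
  - by rewrite inE eqxx.
  - by rewrite /fg /gconj /= ginv1 gmul1l !gmul1r.
rewrite cat_uniq in U; case/and3P: U => U1 D U2.
have [s1 [k1 [S1 A1 K1 E1]]] := IH1 U1 (fun i Hi => Hh i ltac:(by rewrite mem_cat Hi)).
have [s2 [k2 [S2 A2 K2 E2]]] := IH2 U2 (fun i Hi => Hh i ltac:(by rewrite mem_cat Hi orbT)).
set u := ceval k1 w1; set v := ceval k2 w2.
exists (conjL u (invL s1) ++ conjL (gmul v u) (invL s2) ++ conjL (gmul v u) s1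
        ++ conjL (gmul (ginv u) (gmul v u)) s2).
exists (fun i => if i \in cvars w1 then k1 i else k2 i).
split.
- rewrite !size_cat !size_conjL !size_invL expnD.
  have a1 := cvars_gt0 w1; have a2 := cvars_gt0 w2.
  move: S1 S2; set a := size (cvars w1); set b := size (cvars w2).
  have -> : a = (a - 1).+1 by lia.
  have -> : b = (b - 1).+1 by lia.
  rewrite !expnS.
  have p1 : 0 < 4 ^ (a - 1) by rewrite expn_gt0. have p2 : 0 < 4 ^ (b - 1) by rewrite expn_gt0.
  move: p1 p2; set p := 4 ^ (a - 1); set q := 4 ^ (b - 1). move=> P1 P2; have h1 : p <= p * q by rewrite leq_pmulr. have h2 : q <= p * q by rewrite leq_pmull. have -> : 4 * p * (4 * q) = 16 * (p * q) by rewrite mulnCA !mulnA. move: (p * q) h1 h2 => r h1 h2. clearbody p q a b. move=> T1 T2; set x1 := size s1 in T1 *; set x2 := size s2 in T2 *; clearbody x1 x2. lia.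
- have B1 : all (fun p => p.1.1 \in cvars w1 ++ cvars w2) s1.
    by apply: sub_all A1 => p Hp; rewrite mem_cat Hp.
  have B2 : all (fun p => p.1.1 \in cvars w1 ++ cvars w2) s2.
    by apply: sub_all A2 => p Hp; rewrite mem_cat Hp orbT.
  by rewrite !all_cat !all_conjL !all_invL B1 B2.
- move=> i; rewrite mem_cat; case: ifP => Hi /=; first by move=> _; exact: K1.
  by move=> Hi2; apply: K2.
rewrite E1 E2 !map_cat !gprod_cat !gprod_conjL !gprod_invL.
have -> : ceval (fun i => if i \in cvars w1 then k1 i else k2 i) w1 = u.
  by apply: ceval_eq => i ->.
have -> : ceval (fun i => if i \in cvars w1 then k1 i else k2 i) w2 = v.
  apply: ceval_eq => i Hi; case: ifP => // Hi1.
  by move/hasP: D; case; exists i.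
rewrite key; gsimpl; by [].
Qed.

End Main.

Theorem lemma3p5 (n : nat) :
  exists t : nat, 0 < t /\
  forall (w : cword), multilinear_in n w ->
  forall (G : group) (H : G -> Prop), normal_subgroup H ->
  forall (g h : nat -> G), (forall i, i < n -> H (h i)) ->
  exists (a hv : G),
    [/\ ceval (fun i => gmul (g i) (h i)) w = gmul a hv,
        prod_conj_gens n t g a &
        w_value H n w hv].
Proof.
exists (4 ^ n); split; first exact: expn_gt0.
move=> w M G H _ g h Hh.
have Mi : forall i, (i \in cvars w) = (i < n).
  by move=> i; rewrite (perm_mem M) mem_iota.
have U : uniq (cvars w) by rewrite (perm_uniq M) iota_uniq.
have Sz : size (cvars w) = n by rewrite (perm_size M) size_iota.
have [s [k [S A K E]]] := @main G g H h w U (fun i Hi => Hh i ltac:(by rewrite -Mi)).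
exists (gprod (map (fg G g) s)), (ceval k w); split => //.
- exists s; split => //; first by rewrite -Sz.
  by apply: sub_all A => p; rewrite Mi.
- by exists k; split => // i; rewrite -Mi; apply: K.
Qed.
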